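(* Let $X,Y$ be real locally convex Hausdorff topological vector spaces, $M:X\to Y$ a continuous linear mapping, $D\subset X$ a generalized polyhedral convex set, and $K\subset Y$ a polyhedral convex cone. Consider the problem (VLP): $\min_K\{Mx\mid x\in D\}$. Then the set $E^w$ of weakly efficient solutions of (VLP) is the union of finitely many generalized polyhedral convex sets.
   Context: $\langle x^*,x\rangle$ denotes the value of a continuous linear functional $x^*$ at $x$. A generalized polyhedral convex set in $X$ is a set of the form $\{x\in L\mid \langle x_i^*,x\rangle\le\alpha_i,\ i=1,\dots,p\}$ with $x_i^*\in X^*$, $\alpha_i\in\mathbb{R}$, and $L\subset X$ a closed affine subspace; a polyhedral convex cone in $Y$ is a cone of the form $\{y\in Y\mid \langle y_i^*,y\rangle\le\beta_i,\ i=1,\dots,q\}$ with $y_i^*\in Y^*$, $\beta_i\in\mathbb{R}$. A point $u\in D$ is a weakly efficient solution of (VLP) if there is no $x\in D$ with $Mu-Mx\in\operatorname{int}K$, where $\operatorname{int}K$ is the topological interior of $K$. *)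

(* Defs.v *)
From HB Require Import structures.
From mathcomp Require Import all_boot all_order all_algebra.
From mathcomp Require Import all_classical all_reals all_analysis.
Set Implicit Arguments. Unset Strict Implicit. Unset Printing Implicit Defensive.
Import Order.TTheory GRing.Theory Num.Theory.
Import numFieldTopology.Exports.
Local Open Scope classical_set_scope.
Local Open Scope ring_scope.

Definition cont_lin_functional (R : realType) (X : tvsType R) (f : X -> R) : Prop :=
  (forall (a : R) (x y : X), f (a *: x + y) = a * f x + f y) /\ continuous f.

Definition cont_lin_map (R : realType) (X Y : tvsType R) (M : X -> Y) : Prop :=
  (forall (a : R) (x y : X), M (a *: x + y) = a *: M x + M y) /\ continuous M.

Definition lin_subspace (R : realType) (X : tvsType R) (V : set X) : Prop :=
  V 0 /\ (forall x y, V x -> V y -> V (x + y)) /\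
  (forall (a : R) x, V x -> V (a *: x)).

Definition closed_affine_subspace (R : realType) (X : tvsType R) (L : set X) : Prop :=
  closed L /\ exists (x0 : X) (V : set X), lin_subspace V /\ L = [set x0 + v | v in V].

Definition gen_polyhedral_convex (R : realType) (X : tvsType R) (D : set X) : Prop :=
  exists (p : nat) (xs : 'I_p -> X -> R) (alpha : 'I_p -> R) (L : set X),
    closed_affine_subspace L /\ (forall i, cont_lin_functional (xs i)) /\
    D = [set x | L x /\ forall i, xs i x <= alpha i].

Definition is_cone (R : realType) (Y : tvsType R) (K : set Y) : Prop :=
  forall (t : R) (y : Y), 0 < t -> K y -> K (t *: y).

Definition polyhedral_convex_cone (R : realType) (Y : tvsType R) (K : set Y) : Prop :=
  is_cone K /\
  exists (q : nat) (ys : 'I_q -> Y -> R) (beta : 'I_q -> R),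
    (forall i, cont_lin_functional (ys i)) /\
    K = [set y | forall i, ys i y <= beta i].

Definition weakly_efficient_set (R : realType) (X Y : tvsType R)
    (M : X -> Y) (D : set X) (K : set Y) : set X :=
  [set u | D u /\ ~ (exists x, D x /\ interior K (M u - M x))].

(* Main.v *)
Require Import Defs.
From HB Require Import structures.
From mathcomp Require Import all_boot all_order all_algebra.
From mathcomp Require Import all_classical all_reals all_analysis.
From mathcomp Require Import lra.
Import Order.TTheory GRing.Theory Num.Theory.
Import numFieldTopology.Exports.
Local Open Scope classical_set_scope.
Local Open Scope ring_scope.

Lemma lmap0 (R : realType) (X : tvsType R) (Z : lmodType R) (g : X -> Z)
  (H : forall (a : R) (x y : X), g (a *: x + y) = a *: g x + g y) : g 0 = 0.
Proof.
have := H 1 0 0; rewrite scaler0 addr0 scale1r.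
move/(congr1 (fun z => z - g 0)); rewrite subrr addrK => <-//.
Qed.

Lemma lmapB (R : realType) (X : tvsType R) (Z : lmodType R) (g : X -> Z)
  (H : forall (a : R) (x y : X), g (a *: x + y) = a *: g x + g y) x y :
  g (x - y) = g x - g y.
Proof. by have := H (-1) y x; rewrite !scaleN1r addrC => ->; rewrite addrC. Qed.

Lemma lfun0 (R : realType) (X : tvsType R) (g : X -> R)
  (H : forall (a : R) (x y : X), g (a *: x + y) = a * g x + g y) : g 0 = 0.
Proof.
have := H 1 0 0; rewrite scaler0 addr0 mul1r.
move/(congr1 (fun z => z - g 0)); rewrite subrr addrK => <-//.
Qed.

Lemma lfunB (R : realType) (X : tvsType R) (g : X -> R)
  (H : forall (a : R) (x y : X), g (a *: x + y) = a * g x + g y) x y :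
  g (x - y) = g x - g y.
Proof. by have := H (-1) y x; rewrite scaleN1r mulN1r addrC => ->; rewrite addrC. Qed.

Lemma clf_scale (R : realType) (X : tvsType R) (c : R) (g : X -> R) :
  cont_lin_functional g -> cont_lin_functional (fun x => c * g x).
Proof.
move=> [Hl Hc]; split.
  by move=> a x y; rewrite Hl mulrDr mulrCA.
move=> x; exact: cvgMl_tmp (Hc x).
Qed.

Lemma clf_zero (R : realType) (X : tvsType R) :
  cont_lin_functional (fun _ : X => (0 : R)).
Proof. split; [by move=> *; rewrite mulr0 addr0|]. exact: cst_continuous. Qed.

Lemma gp_add (R : realType) (X : tvsType R) (D : set X) (q : nat)
  (g : 'I_q -> X -> R) (b : 'I_q -> R) :
  gen_polyhedral_convex D -> (forall j, cont_lin_functional (g j)) ->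
  gen_polyhedral_convex [set x | D x /\ forall j, g j x <= b j].
Proof.
move=> [p [xs [alpha [L [hL [hxs ->]]]]]] hg.
exists (p + q)%N, (fun k => match fintype.split k with inl i => xs i | inr j => g j end),
  (fun k => match fintype.split k with inl i => alpha i | inr j => b j end), L.
split=> //; split.
  by move=> k; case: (fintype.split k).
apply/seteqP; split=> x /=.
  by move=> [[Lx hi] hj]; split=> // k; case: (fintype.split k).
move=> [Lx hk]; split; first split=> //.
  by move=> i; have := hk (unsplit (inl i)); rewrite unsplitK.
by move=> j; have := hk (unsplit (inr j)); rewrite unsplitK.
Qed.

Lemma int_cone (R : realType) (Y : tvsType R) (K : set Y) (t : R) (y : Y) :
  is_cone K -> 0 < t -> interior K y -> interior K (t *: y).
Proof.
move=> hK t0 Ky; rewrite /interior /=.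
have := nbhsZ (lt0r_neq0 t0) Ky; rewrite /= .
apply: filterS => z [w Kw <-]; exact: hK.
Qed.

Theorem theorem4p5 (R : realType) (X Y : tvsType R)
    (hX : hausdorff_space X) (hY : hausdorff_space Y)
    (M : X -> Y) (hM : cont_lin_map M)
    (D : set X) (hD : gen_polyhedral_convex D)
    (K : set Y) (hK : polyhedral_convex_cone K) :
  exists (k : nat) (P : 'I_k -> set X),
    (forall i, gen_polyhedral_convex (P i)) /\
    weakly_efficient_set M D K = [set x | exists i, P i x].
Proof.
have hD' := hD.
move: hD => [p [xs [alpha [L [hL [hxs eD]]]]]].
have [_ [x0 [V [[V0 [VD VZ]] eL]]]] := hL.
have Mlin := hM.1.
have xslin : forall i, forall (a : R) (x y : X), xs i (a *: x + y) = a * xs i x + xs i y.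
  by move=> i; have [] := hxs i.
pose E := weakly_efficient_set M D K.
pose cJ (J : {set 'I_p}) (j : 'I_p) : R := if j \in J then -1 else 0.
pose F (J : {set 'I_p}) := [set x | D x /\ forall j, cJ J j * xs j x <= cJ J j * alpha j].
have key : forall u, E u -> F (finset (fun j => xs j u == alpha j)) `<=` E.
  move=> u [Du nu] v [Dv hv]; split=> //.
  move=> [x [Dx intx]]; apply: nu.
  have Du' := Du; have Dv' := Dv; have Dx' := Dx.
  rewrite eD in Du' Dv' Dx'.
  move: Du' Dv' Dx' => [Lu hu] [Lv hvv] [Lx hx].
  pose e (j : 'I_p) : R := if xs j u < alpha j then
     (alpha j - xs j u) / (1 + `|xs j x - xs j v|) else 1.
  pose t := \big[Order.min/1]_j e j.
  have e0 : forall j, 0 < e j.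
    move=> j; rewrite /e; case: ifP => // h.
    by apply: divr_gt0; [rewrite subr_gt0 | have := normr_ge0 (xs j x - xs j v); lra].
  have t0 : 0 < t by apply: lt_bigmin => // j _; exact: e0.
  have te : forall j, t <= e j by move=> j; exact: bigmin_le.
  have ht : forall j, t * (xs j x - xs j v) <= alpha j - xs j u.
    move=> j; have := te j; rewrite /e; case: ifP => h tej.
      set d := xs j x - xs j v.
      have s0 : 0 < alpha j - xs j u by rewrite subr_gt0.
      have d0 := normr_ge0 d.
      apply: (le_trans (y := t * `|d|)); first by apply: ler_wpM2l; [exact: ltW | exact: ler_norm].
      apply: (le_trans (y := (alpha j - xs j u) / (1 + `|d|) * `|d|)); first by rewrite ler_wpM2r.
      rewrite mulrAC ler_pdivrMr; last lra.
      nra.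
    have ej : xs j u = alpha j by have := hu j; rewrite le_eqVlt h orbF => /eqP.
    have := hv j; rewrite /cJ inE (introT eqP ej) !mulN1r => hvj.
    have := hvv j; have := hx j; rewrite ej subrr; nra.
  pose x' := t *: (x - v) + u.
  exists x'; split.
    rewrite eD; split.
      rewrite /x'; move: Lu Lv Lx; rewrite eL => -[a Va <-] [b Vb <-] [c Vc <-].
      exists (t *: (c - b) + a); last first.
        by rewrite opprD addrACA subrr add0r addrCA.
      apply: (VD) => //; apply: (VZ); apply: (VD) => //; rewrite -scaleN1r; exact: (VZ).
    move=> j; rewrite /x' xslin lfunB; last exact: xslin.
    have := ht j; lra.
  have -> : M u - M x' = t *: (M v - M x).
    rewrite /x' Mlin (@lmapB _ _ _ _ Mlin) opprD addrCA subrr addr0 -scalerN opprB //.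
  exact: int_cone hK.1 t0 intx.
pose bQ (J : {set 'I_p}) : R := if `[< F J `<=` E >] then 0 else -1.
pose Pset (J : {set 'I_p}) :=
  [set x | F J x /\ forall j : 'I_1, (fun (_ : 'I_1) (_ : X) => (0:R)) j x <= (fun _ => bQ J) j].
exists #|{set 'I_p}|, (fun i => Pset (enum_val i)); split.
  move=> i; apply: gp_add; last by move=> _; exact: clf_zero.
  apply: gp_add => //; move=> j; exact: clf_scale.
apply/seteqP; split.
  move=> u Eu; exists (enum_rank (finset (fun j => xs j u == alpha j))).
  rewrite /Pset enum_rankK; split.
    split; first exact: Eu.1.
    by move=> j; rewrite /cJ inE; case: eqP => [->|_]; rewrite ?mul0r.
  by move=> _ /=; rewrite /bQ asboolT //; exact: key.
move=> x [i [Fx hq]]; have := hq ord0; rewrite /= /bQ.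
case: asboolP => [sub _ | _]; first exact: sub.
by rewrite ler0N1.
Qed.
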